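(* Suppose there exist points $u_*,u^*\in[a,b]$, independent of $m$, such that $|g_m(u)|\le K|g_m(u^* )|$ and $|g_m(u)|\ge K|g_m(u_* )|$ for all $u\in[a,b]$ and all $m$. Suppose further there are constants $\nu_1,\nu_2\in\mathbb R$, $\alpha_1,\alpha_2\ge0$, $\beta_1,\beta_2>0$, independent of $m$ and $n$, such that $$|g_m(u^* )|^2\asymp|m|^{-2\nu_1}\exp(-\alpha_1|m|^{\beta_1})\ (\nu_1>0\text{ if }\alpha_1=0),\qquad |g_m(u_* )|^2\asymp|m|^{-2\nu_2}\exp(-\alpha_2|m|^{\beta_2})\ (\nu_2>0\text{ if }\alpha_2=0).$$ Then the convergence rates in the discrete model are independent of the choice of $M$ and the selection of the sampling points $\underline u$ (and hence coincide with the convergence rates in the continuous model) if and only if either $\alpha_1\alpha_2>0$ and $\beta_1=\beta_2$, or $\alpha_1=\alpha_2=0$ and $\nu_1=\nu_2$.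
   Context: Let $T=[0,1]$, $U=[a,b]$, $-\infty<a\le b<\infty$; $f\in L^2(T)$ and each blurring function $g(u,\cdot)$ are $1$-periodic. Continuous model: $y(u,t)=\int_T f(x)g(u,t-x)dx+n^{-1/2}z(u,t)$, $u\in U,t\in T$, $z$ two-dimensional Gaussian white noise. Discrete model with design $(M,\underline u)$, $\underline u=(u_1,\dots,u_M)\in U^M$, $n=NM$: $y(u_l,t_i)=\int_T f(x)g(u_l,t_i-x)dx+\varepsilon_{li}$, $t_i=i/N$, $\varepsilon_{li}$ i.i.d. $N(0,1)$. $g_m(u)=\int_T g(u,t)e^{-i2\pi mt}dt$ (continuous in $u$); $\tau_1^c(m)=\int_a^b|g_m(u)|^2du$, $\tau_1^d(m,\underline u,M)=M^{-1}\sum_l|g_m(u_l)|^2$. $K$ is a positive constant independent of $m,n,M,\underline u$; $x_m\asymp y_m$ means $C_1y_m\le x_m\le C_2y_m$ for constants $0<C_1\le C_2<\infty$ independent of $m$ and all $|m|$ large. Convergence rates: estimation is of $f$ over Besov balls $B^s_{p,q}(A)$ (defined via the periodized Meyer wavelet coefficients: $f\in L^p(T)$ with $(\sum_k|a_{j_0k}|^p)^{1/p}+(\sum_{j\ge j_0}2^{js'q}(\sum_k|b_{jk}|^p)^{q/p})^{1/q}\le A$, $s'=s+1/2-1/p$, $1\le p,q\le\infty$) under $L^2(T)$ risk. For a given model (the continuous model, or the discrete model with a given design), if $\tau_1$ of that model satisfies $K\varepsilon_n|m|^{-2\nu}(\ln|m|)^{-\lambda}e^{-\alpha|m|^\beta}\le\tau_1(m)\le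 K\varepsilon_n|m|^{-2\nu}(\ln|m|)^{-\lambda}e^{-\alpha|m|^\beta}$ (same $\nu,\lambda,\alpha,\beta,\varepsilon_n$ on both sides), its ''convergence rate'' is the order in $n$ of the asymptotic minimax lower bound for the $L^2$-risk, namely, with $n^*=n\varepsilon_n$, $s^*=s+1/2-1/\min(p,2)$: $(n^* )^{-2s/(2s+2\nu+1)}(\ln n^* )^{2s\lambda/(2s+2\nu+1)}$ if $\alpha=0,\nu(2-p)<ps^*$; $(\ln n^*/n^* )^{2s^*/(2s^*+2\nu)}(\ln n^* )^{2s^*\lambda/(2s^*+2\nu)}$ if $\alpha=0,\nu(2-p)\ge ps^*$; $(\ln n^* )^{-2s^*/\beta}$ if $\alpha>0$. This lower bound is attained up to at most a logarithmic factor by a block thresholding wavelet estimator. Two rates are ''the same'' if they agree up to constant factors for every Besov ball. *)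

(* Defs.v *)
From Stdlib Require Import Reals ZArith List.
From Coquelicot Require Import Coquelicot.
Import ListNotations.
Open Scope R_scope.

Definition absZ (m : Z) : R := Rabs (IZR m).

Definition asympZ (x y : Z -> R) : Prop :=
  exists C1 C2 m0 : R, 0 < C1 /\ 0 < C2 /\
    forall m : Z, m0 <= absZ m -> C1 * y m <= x m /\ x m <= C2 * y m.

Definition tau_shape (nu lam alpha beta : R) (m : Z) : R :=
  Rpower (absZ m) (-2 * nu) * Rpower (ln (absZ m)) (- lam)
  * exp (- alpha * Rpower (absZ m) beta).

Definition design_ok (a b : R) (M : nat) (u : nat -> R) : Prop :=
  (1 <= M)%nat /\ forall l : nat, (l < M)%nat -> a <= u l <= b.

Definition tau_d (gm : Z -> R -> C) (M : nat) (u : nat -> R) (m : Z) : R :=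
  / INR M * fold_right Rplus 0 (map (fun l => (Cmod (gm m (u l)))^2) (seq 0 M)).

Definition tau_form (tau : Z -> R) (nu lam alpha beta : R) (eps : nat -> R) : Prop :=
  (forall n : nat, 0 < eps n) /\ 0 <= alpha /\ 0 < beta /\ (alpha = 0 -> 0 < nu) /\
  exists C1 C2 m0 : R, 0 < C1 /\ 0 < C2 /\
    forall (n : nat) (m : Z), m0 <= absZ m ->
      C1 * eps n * tau_shape nu lam alpha beta m <= tau m /\
      tau m <= C2 * eps n * tau_shape nu lam alpha beta m.

(* Besov index p in [1, +oo] is encoded by its reciprocal ip = 1/p in [0,1]
   (ip = 0 <-> p = +oo).  s* = s + 1/2 - 1/min(p,2) = s + 1/2 - max(ip, 1/2). *)
Definition sstar (s ip : R) : R := s + / 2 - Rmax ip (/ 2).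

(* The minimax convergence rate, as a function of n* = n eps_n.
   The condition nu (2 - p) < p s*  is written  nu (2 ip - 1) < s*
   (divide by p > 0). *)
Definition rate (s ip nu lam alpha beta : R) (ns : R) : R :=
  if Req_EM_T alpha 0 then
    if Rlt_dec (nu * (2 * ip - 1)) (sstar s ip) then
      Rpower ns (- (2 * s) / (2 * s + 2 * nu + 1))
      * Rpower (ln ns) (2 * s * lam / (2 * s + 2 * nu + 1))
    else
      Rpower (ln ns / ns) (2 * sstar s ip / (2 * sstar s ip + 2 * nu))
      * Rpower (ln ns) (2 * sstar s ip * lam / (2 * sstar s ip + 2 * nu))
  else Rpower (ln ns) (- (2 * sstar s ip) / beta).

Definition same_order (r1 r2 : nat -> R) : Prop :=
  exists (c1 c2 : R) (N0 : nat), 0 < c1 /\ 0 < c2 /\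
    forall n : nat, (N0 <= n)%nat -> c1 * r2 n <= r1 n /\ r1 n <= c2 * r2 n.

(* Besov parameters considered: s > 0, p in [1, +oo] (via ip = 1/p), s* > 0.
   (The rate does not depend on q nor on the radius A.) *)
Definition besov_ok (s ip : R) : Prop := 0 < s /\ 0 <= ip <= 1 /\ 0 < sstar s ip.

Definition same_rates (tau tau' : Z -> R) : Prop :=
  forall (nu lam alpha beta : R) (eps : nat -> R)
         (nu' lam' alpha' beta' : R) (eps' : nat -> R),
    tau_form tau nu lam alpha beta eps ->
    tau_form tau' nu' lam' alpha' beta' eps' ->
    forall s ip : R, besov_ok s ip ->
      same_order (fun n => rate s ip nu lam alpha beta (INR n * eps n))
                 (fun n => rate s ip nu' lam' alpha' beta' (INR n * eps' n)).

Definition rates_design_independent (gm : Z -> R -> C) (a b : R) : Prop :=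
  forall (M1 : nat) (u1 : nat -> R) (M2 : nat) (u2 : nat -> R),
    design_ok a b M1 u1 -> design_ok a b M2 u2 ->
    same_rates (tau_d gm M1 u1) (tau_d gm M2 u2).

(* Main.v *)
Require Import Defs.
From Stdlib Require Import Reals ZArith List Lra Lia.
From Coquelicot Require Import Coquelicot.
Open Scope R_scope.

Lemma expl (x y : R) : x <= y -> exp x <= exp y.
Proof. intros [h|h]; [left; apply exp_increasing; auto | subst; lra]. Qed.

Lemma ln_le_sub1 (y : R) : 0 < y -> ln y <= y - 1.
Proof. intros h. pose proof (exp_ineq1_le (ln y)). rewrite exp_ln in H; lra. Qed.

Lemma ln_sqrt_bound (y : R) : 1 <= y -> 0 <= ln y <= 2 * sqrt y.
Proof.
  intros h. assert (hs : 0 < sqrt y) by (apply sqrt_lt_R0; lra).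
  split.
  - destruct (Req_dec y 1) as [e|e]. subst; rewrite ln_1; lra.
    left; rewrite <- ln_1; apply ln_increasing; lra.
  - replace y with (sqrt y * sqrt y) at 1 by (apply sqrt_sqrt; lra).
    rewrite ln_mult by auto. pose proof (ln_le_sub1 _ hs). lra.
Qed.

Lemma Gp (A Q D : R) : 0 < A -> exists Y, forall y, Y <= y -> Q * ln y + D < A * y.
Proof.
  intros hA. set (T := (2 * Rabs Q + Rabs D) / A + 1).
  assert (hT1 : 1 <= T).
  { unfold T. assert (0 <= (2 * Rabs Q + Rabs D) / A).
    { apply Rdiv_le_0_compat; [pose proof (Rabs_pos Q); pose proof (Rabs_pos D); lra | lra]. } lra. }
  assert (hAT : A * T = 2 * Rabs Q + Rabs D + A) by (unfold T; field; lra).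
  exists (T * T). intros y hy.
  assert (y1 : 1 <= y) by nra.
  set (t := sqrt y).
  assert (ht : T <= t).
  { unfold t. rewrite <- (sqrt_square T) by lra. apply sqrt_le_1_alt; lra. }
  assert (htt : t * t = y) by (unfold t; apply sqrt_sqrt; lra).
  destruct (ln_sqrt_bound y y1) as [l0 l1]. fold t in l1.
  assert (Q * ln y <= Rabs Q * ln y).
  { apply Rmult_le_compat_r; auto. apply Rle_abs. }
  assert (Rabs Q * ln y <= Rabs Q * (2 * t)) by (apply Rmult_le_compat_l; auto; apply Rabs_pos).
  pose proof (Rle_abs D). pose proof (Rabs_pos Q). pose proof (Rabs_pos D).
  assert (A * t * t >= (2 * Rabs Q + Rabs D + A) * t).
  { rewrite <- hAT. apply Rle_ge. apply Rmult_le_compat_r; [lra|]. apply Rmult_le_compat_l; lra. }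
  assert (0 <= Rabs D * (t - 1)) by (apply Rmult_le_pos; lra).
  assert (A * t > 0) by (apply Rmult_lt_0_compat; lra).
  replace (A * y) with (A * t * t) by (rewrite <- htt; ring).
  assert (Rabs Q * (2 * t) = 2 * Rabs Q * t) by ring.
  assert ((2 * Rabs Q + Rabs D + A) * t = 2 * Rabs Q * t + Rabs D * t + A * t) by ring.
  assert (Rabs D * (t - 1) = Rabs D * t - Rabs D) by ring.
  lra.
Qed.

Lemma ln_Rpower (x b : R) : ln (Rpower x b) = b * ln x.
Proof. unfold Rpower; apply ln_exp. Qed.

Lemma Rpower_pos (x b : R) : 0 < Rpower x b.
Proof. unfold Rpower; apply exp_pos. Qed.

Lemma exp_big (T x : R) : exp (Rabs T) <= x -> T <= ln x /\ 0 < x.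
Proof.
  intros h. pose proof (exp_pos (Rabs T)). split; [|lra].
  apply ln_le in h; auto. rewrite ln_exp in h. pose proof (Rle_abs T). lra.
Qed.

Lemma G (A b P Q D : R) : 0 < A -> 0 < b ->
  exists X, forall x, X <= x -> P * ln x + Q * ln (ln x) + D < A * Rpower x b.
Proof.
  intros hA hb. set (R0 := Rabs P + Rabs Q).
  destruct (Gp A (R0 / b) D hA) as [Y hY].
  exists (Rmax (exp 1) (exp (Rabs Y / b))). intros x hx.
  pose proof (Rmax_l (exp 1) (exp (Rabs Y / b))).
  pose proof (Rmax_r (exp 1) (exp (Rabs Y / b))).
  assert (hx0 : 0 < x) by (pose proof (exp_pos 1); lra).
  assert (hl1 : 1 <= ln x). { rewrite <- (ln_exp 1). apply ln_le; [apply exp_pos|lra]. }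
  assert (hlY : Rabs Y / b <= ln x). { rewrite <- (ln_exp (Rabs Y / b)). apply ln_le; [apply exp_pos|lra]. }
  assert (hll : 0 <= ln (ln x) <= ln x).
  { split. destruct (Req_dec (ln x) 1) as [e|e]. rewrite e, ln_1; lra.
    left; rewrite <- ln_1; apply ln_increasing; lra. pose proof (ln_le_sub1 (ln x)); lra. }
  assert (hy : Y <= Rpower x b).
  { unfold Rpower. pose proof (exp_ineq1_le (b * ln x)).
    assert (Rabs Y <= b * ln x). { apply (Rmult_le_compat_l b) in hlY; [|lra].
      replace (b * (Rabs Y / b)) with (Rabs Y) in hlY by (field; lra). lra. }
    pose proof (Rle_abs Y). lra. }
  specialize (hY _ hy). rewrite ln_Rpower in hY.
  replace (R0 / b * (b * ln x)) with (R0 * ln x) in hY by (field; lra).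
  assert (P * ln x <= Rabs P * ln x) by (apply Rmult_le_compat_r; [lra| apply Rle_abs]).
  assert (Q * ln (ln x) <= Rabs Q * ln x).
  { apply Rle_trans with (Rabs Q * ln (ln x)).
    apply Rmult_le_compat_r; [lra|apply Rle_abs].
    apply Rmult_le_compat_l; [apply Rabs_pos|lra]. }
  unfold R0 in hY. lra.
Qed.
Lemma Rpow_big (d K : R) : 0 < d -> exists X, forall x, X <= x -> K <= Rpower x d.
Proof.
  intros hd. exists (exp (Rabs K / d)). intros x hx.
  destruct (exp_big (Rabs K / d) x) as [h1 h2].
  { rewrite Rabs_pos_eq; auto. apply Rdiv_le_0_compat; [apply Rabs_pos|lra]. }
  unfold Rpower. pose proof (exp_ineq1_le (d * ln x)).
  assert (Rabs K <= d * ln x).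
  { apply (Rmult_le_compat_l d) in h1; [|lra].
    replace (d * (Rabs K / d)) with (Rabs K) in h1 by (field; lra). lra. }
  pose proof (Rle_abs K). lra.
Qed.

Lemma H (p q a b K : R) : 0 <= a -> 0 < b ->
  (0 < a \/ (a = 0 /\ 0 < p) \/ (a = 0 /\ p = 0 /\ 0 < q)) ->
  exists X, forall x, X <= x -> - p * ln x - q * ln (ln x) - a * Rpower x b < K.
Proof.
  intros ha hb [h|[[h1 h2]|[h1 [h2 h3]]]].
  - destruct (G a b (-p) (-q) (-K) h hb) as [X hX]. exists X. intros x hx.
    specialize (hX x hx). lra.
  - subst a. destruct (Gp p (-q) (-K) h2) as [Y hY].
    exists (exp (Rabs Y)). intros x hx. destruct (exp_big Y x hx) as [e1 e2].
    specialize (hY _ e1). lra.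
  - subst a p. exists (exp (exp (Rabs (K / q) + 1))). intros x hx.
    destruct (exp_big (exp (Rabs (K / q) + 1)) x) as [e1 e2].
    { rewrite Rabs_pos_eq by (left; apply exp_pos). auto. }
    assert (ln (exp (Rabs (K/q) + 1)) <= ln (ln x)) by (apply ln_le; [apply exp_pos|auto]).
    rewrite ln_exp in H. pose proof (Rle_abs (- (K / q))). rewrite Rabs_Ropp in H0.
    assert (- (K / q) < ln (ln x)) by lra.
    apply (Rmult_lt_compat_l q) in H1; auto.
    assert (q * - (K / q) = - K) by (field; lra). lra.
Qed.

Lemma Hdom (a b a' b' : R) : 0 < a -> b' < b ->
  exists X, forall x, X <= x -> a' * Rpower x b' <= a / 2 * Rpower x b.
Proof.
  intros ha hbb. destruct (Rpow_big (b - b') (2 * Rabs a' / a)) as [X hX]; [lra|].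
  exists X. intros x hx. specialize (hX x hx).
  replace b with (b' + (b - b')) by ring. rewrite Rpower_plus.
  pose proof (Rpower_pos x b'). pose proof (Rle_abs a').
  assert (a / 2 * (2 * Rabs a' / a) = Rabs a') by (field; lra).
  assert (a' * Rpower x b' <= Rabs a' * Rpower x b') by (apply Rmult_le_compat_r; lra).
  assert (Rabs a' * Rpower x b' <= a / 2 * Rpower x (b - b') * Rpower x b').
  { apply Rmult_le_compat_r; [lra|].
    apply Rle_trans with (a / 2 * (2 * Rabs a' / a)); [lra|]. apply Rmult_le_compat_l; lra. }
  lra.
Qed.

Definition Lsh (nu lam al be x : R) : R :=
  -2 * nu * ln x + - lam * ln (ln x) + - al * Rpower x be.

Lemma tau_shape_pos nu lam al be m : 0 < tau_shape nu lam al be m.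
Proof.
  unfold tau_shape. repeat apply Rmult_lt_0_compat; try apply Rpower_pos; apply exp_pos.
Qed.

Lemma ln_shape nu lam al be m : ln (tau_shape nu lam al be m) = Lsh nu lam al be (absZ m).
Proof.
  unfold tau_shape, Lsh. rewrite ln_mult, ln_mult, !ln_Rpower, ln_exp;
    try apply Rpower_pos; try apply exp_pos.
  ring. apply Rmult_lt_0_compat; apply Rpower_pos.
Qed.

Lemma big_Z (r : R) : exists m : Z, r <= absZ m.
Proof.
  exists (up (Rabs r)). destruct (archimed (Rabs r)) as [h1 _].
  unfold absZ. pose proof (Rle_abs r). pose proof (Rle_abs (IZR (up (Rabs r)))). lra.
Qed.

Lemma no_dom n1 l1 a1 b1 n2 l2 a2 b2 c m0 X : 0 < c ->
  (forall m, m0 <= absZ m -> c * tau_shape n1 l1 a1 b1 m <= tau_shape n2 l2 a2 b2 m) ->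
  (forall x, X <= x -> Lsh n2 l2 a2 b2 x - Lsh n1 l1 a1 b1 x < ln c) -> False.
Proof.
  intros hc h1 h2. destruct (big_Z (Rmax m0 X)) as [m hm].
  pose proof (Rmax_l m0 X). pose proof (Rmax_r m0 X).
  specialize (h1 m ltac:(lra)). specialize (h2 (absZ m) ltac:(lra)).
  apply ln_le in h1. rewrite ln_mult, !ln_shape in h1 by (auto; apply tau_shape_pos). lra.
  apply Rmult_lt_0_compat; auto; apply tau_shape_pos.
Qed.
Lemma from_form tau nu lam al be eps n1 a1 b1 n2 a2 b2 kl kh m1 :
  tau_form tau nu lam al be eps -> 0 < kl -> 0 < kh ->
  (forall m, m1 <= absZ m -> kl * tau_shape n2 0 a2 b2 m <= tau m /\ tau m <= kh * tau_shape n1 0 a1 b1 m) ->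
  exists c c' M, 0 < c /\ 0 < c' /\
    (forall m, M <= absZ m -> c * tau_shape n2 0 a2 b2 m <= tau_shape nu lam al be m) /\
    (forall m, M <= absZ m -> c' * tau_shape nu lam al be m <= tau_shape n1 0 a1 b1 m).
Proof.
  intros [heps [_ [_ [_ [C1 [C2 [m0 [hC1 [hC2 hf]]]]]]]]] hkl hkh hs.
  pose proof (heps 0%nat) as he.
  exists (kl / (C2 * eps 0%nat)), (C1 * eps 0%nat / kh), (Rmax m0 m1).
  split; [apply Rdiv_lt_0_compat; auto; apply Rmult_lt_0_compat; auto|].
  split; [apply Rdiv_lt_0_compat; auto; apply Rmult_lt_0_compat; auto|].
  split; intros m hm; pose proof (Rmax_l m0 m1); pose proof (Rmax_r m0 m1);
    destruct (hf 0%nat m ltac:(lra)) as [f1 f2]; destruct (hs m ltac:(lra)) as [s1 s2];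
    pose proof (tau_shape_pos nu lam al be m); pose proof (tau_shape_pos n1 0 a1 b1 m);
    pose proof (tau_shape_pos n2 0 a2 b2 m).
  - assert (0 < C2 * eps 0%nat) by (apply Rmult_lt_0_compat; auto).
    unfold Rdiv. rewrite Rmult_assoc. apply (Rmult_le_reg_l (C2 * eps 0%nat)); auto.
    replace (C2 * eps 0%nat * (kl * (/ (C2 * eps 0%nat) * tau_shape n2 0 a2 b2 m)))
      with (kl * tau_shape n2 0 a2 b2 m) by (field; lra). lra.
  - unfold Rdiv. apply (Rmult_le_reg_l kh); auto.
    replace (kh * (C1 * eps 0%nat * / kh * tau_shape nu lam al be m))
      with (C1 * eps 0%nat * tau_shape nu lam al be m) by (field; lra). lra.
Qed.

Lemma params_A tau nu lam al be eps nu0 b1 b2 kl kh m1 :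
  tau_form tau nu lam al be eps -> 0 < kl -> 0 < kh ->
  (forall m, m1 <= absZ m -> kl * tau_shape nu0 0 0 b2 m <= tau m /\ tau m <= kh * tau_shape nu0 0 0 b1 m) ->
  al = 0 /\ nu = nu0 /\ lam = 0.
Proof.
  intros hf hkl hkh hs.
  destruct (from_form _ _ _ _ _ _ _ _ _ _ _ _ _ _ _ hf hkl hkh hs) as [c [c' [M [hc [hc' [hlo hup]]]]]].
  destruct hf as [_ [hal [hbe _]]].
  assert (al = 0).
  { destruct hal as [hal|hal]; auto. exfalso.
    destruct (H (2 * (nu - nu0)) lam al be (ln c) ltac:(lra) ltac:(lra) ltac:(left; lra)) as [X hX].
    apply (no_dom _ _ _ _ _ _ _ _ _ _ X hc hlo). intros x hx. specialize (hX x hx).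
    replace (Lsh nu lam al be x - Lsh nu0 0 0 b2 x) with
      (- (2 * (nu - nu0)) * ln x - lam * ln (ln x) - al * Rpower x be) by (unfold Lsh; ring). lra. }
  subst al. split; auto.
  assert (nu = nu0).
  { destruct (Rtotal_order nu nu0) as [h|[h|h]]; auto; exfalso.
    - destruct (H (2 * (nu0 - nu)) (- lam) 0 1 (ln c') ltac:(lra) ltac:(lra) ltac:(right; left; split; lra)) as [X hX].
      apply (no_dom _ _ _ _ _ _ _ _ _ _ X hc' hup). intros x hx. specialize (hX x hx).
      replace (Lsh nu0 0 0 b1 x - Lsh nu lam 0 be x) with
        (- (2 * (nu0 - nu)) * ln x - - lam * ln (ln x) - 0 * Rpower x 1) by (unfold Lsh; ring). lra.
    - destruct (H (2 * (nu - nu0)) lam 0 1 (ln c) ltac:(lra) ltac:(lra) ltac:(right; left; split; lra)) as [X hX].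
      apply (no_dom _ _ _ _ _ _ _ _ _ _ X hc hlo). intros x hx. specialize (hX x hx).
      replace (Lsh nu lam 0 be x - Lsh nu0 0 0 b2 x) with
        (- (2 * (nu - nu0)) * ln x - lam * ln (ln x) - 0 * Rpower x 1) by (unfold Lsh; ring). lra. }
  subst nu. split; auto.
  destruct (Rtotal_order lam 0) as [h|[h|h]]; auto; exfalso.
  - destruct (H 0 (- lam) 0 1 (ln c') ltac:(lra) ltac:(lra) ltac:(right; right; repeat split; lra)) as [X hX].
    apply (no_dom _ _ _ _ _ _ _ _ _ _ X hc' hup). intros x hx. specialize (hX x hx).
    replace (Lsh nu0 0 0 b1 x - Lsh nu0 lam 0 be x) with
      (- 0 * ln x - - lam * ln (ln x) - 0 * Rpower x 1) by (unfold Lsh; ring). lra.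
  - destruct (H 0 lam 0 1 (ln c) ltac:(lra) ltac:(lra) ltac:(right; right; repeat split; lra)) as [X hX].
    apply (no_dom _ _ _ _ _ _ _ _ _ _ X hc hlo). intros x hx. specialize (hX x hx).
    replace (Lsh nu0 lam 0 be x - Lsh nu0 0 0 b2 x) with
      (- 0 * ln x - lam * ln (ln x) - 0 * Rpower x 1) by (unfold Lsh; ring). lra.
Qed.

Lemma params_B tau nu lam al be eps n1 n2 a1 a2 bb kl kh m1 :
  tau_form tau nu lam al be eps -> 0 < kl -> 0 < kh -> 0 < a1 -> 0 < a2 -> 0 < bb ->
  (forall m, m1 <= absZ m -> kl * tau_shape n2 0 a2 bb m <= tau m /\ tau m <= kh * tau_shape n1 0 a1 bb m) ->
  al <> 0 /\ be = bb.
Proof.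
  intros hf hkl hkh ha1 ha2 hbb hs.
  destruct (from_form _ _ _ _ _ _ _ _ _ _ _ _ _ _ _ hf hkl hkh hs) as [c [c' [M [hc [hc' [hlo hup]]]]]].
  destruct hf as [_ [hal [hbe _]]].
  assert (hal0 : al <> 0).
  { intros e; subst al.
    destruct (H (2 * (n1 - nu)) (- lam) a1 bb (ln c') ltac:(lra) ltac:(lra) ltac:(left; lra)) as [X hX].
    apply (no_dom _ _ _ _ _ _ _ _ _ _ X hc' hup). intros x hx. specialize (hX x hx).
    replace (Lsh n1 0 a1 bb x - Lsh nu lam 0 be x) with
      (- (2 * (n1 - nu)) * ln x - - lam * ln (ln x) - a1 * Rpower x bb) by (unfold Lsh; ring). lra. }
  split; auto.
  assert (hal' : 0 < al) by lra.
  destruct (Rtotal_order be bb) as [h|[h|h]]; auto; exfalso.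
  - destruct (Hdom a1 bb al be ha1 h) as [X1 h1].
    destruct (H (2 * (n1 - nu)) (- lam) (a1 / 2) bb (ln c') ltac:(lra) ltac:(lra) ltac:(left; lra)) as [X2 h2].
    apply (no_dom _ _ _ _ _ _ _ _ _ _ (Rmax X1 X2) hc' hup). intros x hx.
    pose proof (Rmax_l X1 X2); pose proof (Rmax_r X1 X2).
    specialize (h1 x ltac:(lra)). specialize (h2 x ltac:(lra)).
    replace (Lsh n1 0 a1 bb x - Lsh nu lam al be x) with
      (- (2 * (n1 - nu)) * ln x - - lam * ln (ln x) - a1 * Rpower x bb + al * Rpower x be) by (unfold Lsh; ring).
    lra.
  - destruct (Hdom al be a2 bb hal' h) as [X1 h1].
    destruct (H (2 * (nu - n2)) lam (al / 2) be (ln c) ltac:(lra) ltac:(lra) ltac:(left; lra)) as [X2 h2].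
    apply (no_dom _ _ _ _ _ _ _ _ _ _ (Rmax X1 X2) hc hlo). intros x hx.
    pose proof (Rmax_l X1 X2); pose proof (Rmax_r X1 X2).
    specialize (h1 x ltac:(lra)). specialize (h2 x ltac:(lra)).
    replace (Lsh nu lam al be x - Lsh n2 0 a2 bb x) with
      (- (2 * (nu - n2)) * ln x - lam * ln (ln x) - al * Rpower x be + a2 * Rpower x bb) by (unfold Lsh; ring).
    lra.
Qed.
Lemma rpow_logratio (x y r B : R) : Rabs (ln x - ln y) <= B ->
  exp (- (Rabs r * B)) * Rpower y r <= Rpower x r <= exp (Rabs r * B) * Rpower y r.
Proof.
  intros h. unfold Rpower.
  replace (r * ln x) with (r * (ln x - ln y) + r * ln y) by ring. rewrite exp_plus.
  assert (hq : Rabs (r * (ln x - ln y)) <= Rabs r * B).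
  { rewrite Rabs_mult. apply Rmult_le_compat_l; auto; apply Rabs_pos. }
  pose proof (exp_pos (r * ln y)).
  apply Rabs_le_between in hq. destruct hq as [h1 h2].
  split; apply Rmult_le_compat_r; try lra; apply expl; lra.
Qed.

Definition Pf (f : R -> R) := forall c1 c2, 0 < c1 -> exists k1 k2 Y, 0 < k1 /\ 0 < k2 /\
  forall x y, Y <= y -> c1 * y <= x <= c2 * y -> k1 * f y <= f x <= k2 * f y.

Lemma Pf_pow (F : R -> R) r :
  (forall c1 c2, 0 < c1 -> exists B Y, forall x y, Y <= y -> c1 * y <= x <= c2 * y ->
     Rabs (ln (F x) - ln (F y)) <= B) -> Pf (fun x => Rpower (F x) r).
Proof.
  intros h c1 c2 hc. destruct (h c1 c2 hc) as [B [Y hY]].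
  exists (exp (- (Rabs r * B))), (exp (Rabs r * B)), Y.
  split; [apply exp_pos|]. split; [apply exp_pos|].
  intros x y hy hxy. apply rpow_logratio; auto.
Qed.

Lemma Pf_ext f g : (forall x, f x = g x) -> Pf g -> Pf f.
Proof.
  intros e h c1 c2 hc. destruct (h c1 c2 hc) as [k1 [k2 [Y [h1 [h2 h3]]]]].
  exists k1, k2, Y. split; auto. split; auto. intros x y hy hxy. rewrite !e. auto.
Qed.

Lemma LR_id c1 c2 x y : 0 < c1 -> 0 < y -> c1 * y <= x <= c2 * y ->
  0 < x /\ Rabs (ln x - ln y) <= Rabs (ln c1) + Rabs (ln c2).
Proof.
  intros hc hy [h1 h2]. assert (hx : 0 < x) by nra. split; auto.
  rewrite <- ln_div by auto.
  assert (q1 : c1 <= x / y). { apply (Rmult_le_reg_r y); auto. unfold Rdiv; rewrite Rmult_assoc, Rinv_l; lra. }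
  assert (q2 : x / y <= c2). { apply (Rmult_le_reg_r y); auto. unfold Rdiv; rewrite Rmult_assoc, Rinv_l; lra. }
  assert (ln c1 <= ln (x / y)) by (apply ln_le; auto).
  assert (ln (x / y) <= ln c2) by (apply ln_le; auto; apply Rdiv_lt_0_compat; auto).
  pose proof (Rle_abs (ln c2)). pose proof (Rle_abs (- ln c1)) as q4. rewrite Rabs_Ropp in q4. pose proof (Rabs_pos (ln c2)). pose proof (Rabs_pos (ln c1)).
  apply Rabs_le; split; lra.
Qed.

Lemma ln_diff_le u v : 1 <= u -> 1 <= v -> Rabs (ln u - ln v) <= Rabs (u - v).
Proof.
  intros hu hv.
  assert (HH : forall a b, 1 <= a -> 1 <= b -> ln a - ln b <= Rabs (a - b)).
  { intros a b ha hb. rewrite <- ln_div by lra.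
    pose proof (ln_le_sub1 (a / b) ltac:(apply Rdiv_lt_0_compat; lra)).
    assert (a / b - 1 = (a - b) / b) by (field; lra).
    assert ((a - b) / b <= Rabs (a - b)).
    { destruct (Rle_dec a b).
      - assert ((a - b) / b <= 0). { unfold Rdiv. apply Rmult_le_0_r; [lra|]. left; apply Rinv_0_lt_compat; lra. }
        pose proof (Rabs_pos (a - b)); lra.
      - rewrite Rabs_pos_eq by lra. apply (Rmult_le_reg_r b); [lra|].
        unfold Rdiv; rewrite Rmult_assoc, Rinv_l by lra. nra. }
    lra. }
  pose proof (HH u v hu hv) as q1. pose proof (HH v u hv hu) as q2.
  rewrite Rabs_minus_sym in q2. apply Rabs_le; split; lra.
Qed.

Lemma LR_ln c1 c2 x y : 0 < c1 -> exp (Rabs (ln c1) + Rabs (ln c2) + 1) <= y -> c1 * y <= x <= c2 * y ->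
  1 <= ln x /\ 1 <= ln y /\ Rabs (ln x - ln y) <= Rabs (ln c1) + Rabs (ln c2) /\
  Rabs (ln (ln x) - ln (ln y)) <= Rabs (ln c1) + Rabs (ln c2).
Proof.
  intros hc hy hxy. set (B := Rabs (ln c1) + Rabs (ln c2)) in *.
  pose proof (exp_pos (B + 1)).
  assert (hy0 : 0 < y) by lra.
  destruct (LR_id c1 c2 x y hc hy0 hxy) as [hx hB]. fold B in hB.
  assert (B + 1 <= ln y). { rewrite <- (ln_exp (B + 1)). apply ln_le; auto. }
  assert (0 <= B) by (unfold B; pose proof (Rabs_pos (ln c1)); pose proof (Rabs_pos (ln c2)); lra).
  apply Rabs_le_between in hB.
  assert (1 <= ln x) by lra. repeat split; auto; try lra. apply Rabs_le; split; lra.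
  pose proof (ln_diff_le (ln x) (ln y) ltac:(lra) ltac:(lra)).
  assert (Rabs (ln x - ln y) <= B) by (apply Rabs_le; split; lra). lra.
Qed.

Lemma Pf_id r : Pf (fun x => Rpower x r).
Proof.
  apply (Pf_pow (fun x => x)). intros c1 c2 hc.
  exists (Rabs (ln c1) + Rabs (ln c2)), 1. intros x y hy hxy.
  apply (LR_id c1 c2 x y hc); auto; lra.
Qed.

Lemma Pf_ln r : Pf (fun x => Rpower (ln x) r).
Proof.
  apply (Pf_pow ln). intros c1 c2 hc.
  exists (Rabs (ln c1) + Rabs (ln c2)), (exp (Rabs (ln c1) + Rabs (ln c2) + 1)). intros x y hy hxy.
  apply (LR_ln c1 c2 x y hc hy hxy).
Qed.

Lemma Pf_lnx r : Pf (fun x => Rpower (ln x / x) r).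
Proof.
  apply (Pf_pow (fun x => ln x / x)). intros c1 c2 hc.
  exists (2 * (Rabs (ln c1) + Rabs (ln c2))), (exp (Rabs (ln c1) + Rabs (ln c2) + 1)). intros x y hy hxy.
  destruct (LR_ln c1 c2 x y hc hy hxy) as [h1 [h2 [h3 h4]]].
  pose proof (exp_pos (Rabs (ln c1) + Rabs (ln c2) + 1)).
  destruct (LR_id c1 c2 x y hc ltac:(lra) hxy) as [hx _].
  rewrite !ln_div by lra.
  apply Rabs_le_between in h3. apply Rabs_le_between in h4. apply Rabs_le; split; lra.
Qed.
Lemma eps_bnd tau nu lam al be eps : tau_form tau nu lam al be eps ->
  exists e1 e2, 0 < e1 /\ forall n, e1 <= eps n <= e2.
Proof.
  intros [heps [_ [_ [_ [C1 [C2 [m0 [hC1 [hC2 hf]]]]]]]]].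
  destruct (big_Z m0) as [m hm].
  set (sh := tau_shape nu lam al be m). assert (hsh : 0 < sh) by apply tau_shape_pos.
  set (T := tau m).
  assert (hT : 0 < T).
  { destruct (hf 0%nat m hm) as [h _]. pose proof (heps 0%nat).
    assert (0 < C1 * eps 0%nat * sh) by (apply Rmult_lt_0_compat; [apply Rmult_lt_0_compat|]; auto). fold sh T in h. lra. }
  exists (T / (C2 * sh)), (T / (C1 * sh)). split.
  { apply Rdiv_lt_0_compat; auto. apply Rmult_lt_0_compat; auto. }
  intros n. destruct (hf n m hm) as [h1 h2]. fold sh T in h1, h2. split.
  - apply (Rmult_le_reg_r (C2 * sh)); [apply Rmult_lt_0_compat; auto|].
    replace (T / (C2 * sh) * (C2 * sh)) with T by (field; lra). lra.
  - apply (Rmult_le_reg_r (C1 * sh)); [apply Rmult_lt_0_compat; auto|].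
    replace (T / (C1 * sh) * (C1 * sh)) with T by (field; lra). lra.
Qed.

Lemma so_of (h f g : R -> R) (eps eps' : nat -> R) e1 e2 e1' e2' :
  Pf h -> (forall x, f x = h x) -> (forall x, g x = h x) ->
  0 < e1 -> (forall n, e1 <= eps n <= e2) -> 0 < e1' -> (forall n, e1' <= eps' n <= e2') ->
  same_order (fun n => f (INR n * eps n)) (fun n => g (INR n * eps' n)).
Proof.
  intros hP ef eg he1 he he1' he'.
  assert (he2' : 0 < e2') by (destruct (he' 0%nat); lra).
  assert (he1e : 0 < e1 / e2') by (apply Rdiv_lt_0_compat; auto).
  destruct (hP (e1 / e2') (e2 / e1') he1e) as [k1 [k2 [Y [hk1 [hk2 hk]]]]].
  destruct (INR_archimed e1' (Rmax Y e1') he1') as [N hN].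
  exists k1, k2, N. split; auto. split; auto. intros n hn.
  rewrite ef, eg.
  pose proof (le_INR _ _ hn) as hnN. pose proof (Rmax_l Y e1'). pose proof (Rmax_r Y e1').
  assert (hN1 : 1 < INR N) by (apply (Rmult_lt_reg_r e1'); lra).
  destruct (he n) as [a1 a2]. destruct (he' n) as [b1 b2].
  set (t := INR n) in *.
  apply hk.
  - assert (t * e1' <= t * eps' n) by (apply Rmult_le_compat_l; lra).
    assert (INR N * e1' <= t * e1') by (apply Rmult_le_compat_r; lra). lra.
  - split.
    + assert (e1 / e2' * eps' n <= e1).
      { apply (Rmult_le_reg_r e2'); auto. replace (e1 / e2' * eps' n * e2') with (e1 * eps' n) by (field; lra).
        apply Rmult_le_compat_l; lra. }
      replace (e1 / e2' * (t * eps' n)) with (t * (e1 / e2' * eps' n)) by ring.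
      apply Rmult_le_compat_l; lra.
    + assert (eps n <= e2 / e1' * eps' n).
      { apply (Rmult_le_reg_r e1'); auto. replace (e2 / e1' * eps' n * e1') with (e2 * eps' n) by (field; lra).
        assert (e2 * e1' <= e2 * eps' n) by (apply Rmult_le_compat_l; lra).
        assert (eps n * e1' <= e2 * e1') by (apply Rmult_le_compat_r; lra). lra. }
      replace (e2 / e1' * (t * eps' n)) with (t * (e2 / e1' * eps' n)) by ring.
      apply Rmult_le_compat_l; lra.
Qed.

Lemma Rpower_0 x : Rpower x 0 = 1.
Proof. unfold Rpower. rewrite Rmult_0_l. apply exp_0. Qed.

Lemma rate_A_Pf s ip nu be : Pf (fun x => rate s ip nu 0 0 be x).
Proof.
  unfold rate. destruct (Req_EM_T 0 0) as [_|e]; [|congruence].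
  destruct (Rlt_dec (nu * (2 * ip - 1)) (sstar s ip)).
  - apply (Pf_ext _ (fun x => Rpower x (- (2 * s) / (2 * s + 2 * nu + 1)))); [|apply Pf_id].
    intros x. replace (2 * s * 0 / (2 * s + 2 * nu + 1)) with 0 by (unfold Rdiv; ring).
    rewrite Rpower_0; ring.
  - apply (Pf_ext _ (fun x => Rpower (ln x / x) (2 * sstar s ip / (2 * sstar s ip + 2 * nu)))); [|apply Pf_lnx].
    intros x. replace (2 * sstar s ip * 0 / (2 * sstar s ip + 2 * nu)) with 0 by (unfold Rdiv; ring).
    rewrite Rpower_0; ring.
Qed.

Lemma rate_A_beta s ip nu be be' x : rate s ip nu 0 0 be x = rate s ip nu 0 0 be' x.
Proof. unfold rate. destruct (Req_EM_T 0 0) as [_|e]; [reflexivity|congruence]. Qed.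

Lemma rate_B s ip nu lam al be x : al <> 0 ->
  rate s ip nu lam al be x = Rpower (ln x) (- (2 * sstar s ip) / be).
Proof. intros h. unfold rate. destruct (Req_EM_T al 0); [congruence|reflexivity]. Qed.
Lemma fold_bound (L : list nat) (f : nat -> R) A B :
  (forall l, In l L -> A <= f l <= B) ->
  INR (length L) * A <= fold_right Rplus 0 (map f L) <= INR (length L) * B.
Proof.
  induction L as [|x L IH]; intros h; cbn [length map fold_right].
  - change (INR 0) with 0. lra.
  - assert (hx := h x (or_introl eq_refl)).
    assert (IH' := IH (fun l hl => h l (or_intror hl))).
    rewrite S_INR. lra.
Qed.

Lemma tau_d_bnd gm a b M u A B m : design_ok a b M u ->
  (forall v, a <= v <= b -> A <= (Cmod (gm m v))^2 <= B) ->
  A <= tau_d gm M u m <= B.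
Proof.
  intros [hM hu] h. unfold tau_d.
  destruct (fold_bound (seq 0 M) (fun l => (Cmod (gm m (u l)))^2) A B) as [h1 h2].
  { intros l hl. apply in_seq in hl. apply h, hu. lia. }
  rewrite length_seq in h1, h2.
  assert (hM0 : 0 < INR M) by (apply lt_0_INR; lia).
  split.
  - apply (Rmult_le_reg_l (INR M)); auto. rewrite <- Rmult_assoc, Rinv_r by lra. lra.
  - apply (Rmult_le_reg_l (INR M)); auto. rewrite <- Rmult_assoc, Rinv_r by lra. lra.
Qed.

Lemma shape0 nu al be m :
  Rpower (absZ m) (-2 * nu) * exp (- al * Rpower (absZ m) be) = tau_shape nu 0 al be m.
Proof. unfold tau_shape. replace (-0) with 0 by ring. rewrite Rpower_0. ring. Qed.

Lemma sandwich (gm : Z -> R -> C) a b uup ulo nu1 nu2 al1 al2 be1 be2 :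
  (exists K : R, 0 < K /\
     forall (u : R) (m : Z), a <= u <= b -> Cmod (gm m u) <= K * Cmod (gm m uup)) ->
  (exists K : R, 0 < K /\
     forall (u : R) (m : Z), a <= u <= b -> K * Cmod (gm m ulo) <= Cmod (gm m u)) ->
  asympZ (fun m => (Cmod (gm m uup))^2)
         (fun m => Rpower (absZ m) (-2 * nu1) * exp (- al1 * Rpower (absZ m) be1)) ->
  asympZ (fun m => (Cmod (gm m ulo))^2)
         (fun m => Rpower (absZ m) (-2 * nu2) * exp (- al2 * Rpower (absZ m) be2)) ->
  exists kl kh m1, 0 < kl /\ 0 < kh /\ forall M u, design_ok a b M u ->
    forall m, m1 <= absZ m ->
      kl * tau_shape nu2 0 al2 be2 m <= tau_d gm M u m /\ tau_d gm M u m <= kh * tau_shape nu1 0 al1 be1 m.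
Proof.
  intros [K1 [hK1 h1]] [K2 [hK2 h2]] [Cu1 [Cu2 [mu0 [hu1 [hu2 hu]]]]] [Cl1 [Cl2 [ml0 [hl1 [hl2 hl]]]]].
  exists (K2 ^ 2 * Cl1), (K1 ^ 2 * Cu2), (Rmax mu0 ml0).
  split; [apply Rmult_lt_0_compat; auto; apply pow_lt; auto|].
  split; [apply Rmult_lt_0_compat; auto; apply pow_lt; auto|].
  intros M u hd m hm. pose proof (Rmax_l mu0 ml0); pose proof (Rmax_r mu0 ml0).
  destruct (hu m ltac:(lra)) as [_ u2]. destruct (hl m ltac:(lra)) as [l1 _].
  rewrite shape0 in u2, l1.
  destruct (tau_d_bnd gm a b M u (K2 ^ 2 * (Cmod (gm m ulo))^2) (K1 ^ 2 * (Cmod (gm m uup))^2) m hd) as [t1 t2].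
  { intros v hv. specialize (h1 v m hv). specialize (h2 v m hv).
    pose proof (Cmod_ge_0 (gm m v)). pose proof (Cmod_ge_0 (gm m ulo)).
    rewrite <- !Rpow_mult_distr. split; apply pow_incr; split; auto.
    apply Rmult_le_pos; lra. }
  pose proof (pow2_ge_0 K1). pose proof (pow2_ge_0 K2).
  split.
  - apply Rle_trans with (K2 ^ 2 * Cmod (gm m ulo) ^ 2); auto.
    rewrite Rmult_assoc. apply Rmult_le_compat_l; auto.
  - apply Rle_trans with (K1 ^ 2 * Cmod (gm m uup) ^ 2); auto.
    rewrite Rmult_assoc. apply Rmult_le_compat_l; auto.
Qed.
Lemma dir_back (gm : Z -> R -> C) a b nu1 nu2 al1 al2 be1 be2 kl kh m1 :
  0 < kl -> 0 < kh -> 0 <= al1 -> 0 <= al2 -> 0 < be1 -> 0 < be2 ->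
  (forall M u, design_ok a b M u -> forall m, m1 <= absZ m ->
      kl * tau_shape nu2 0 al2 be2 m <= tau_d gm M u m /\ tau_d gm M u m <= kh * tau_shape nu1 0 al1 be1 m) ->
  ((0 < al1 * al2 /\ be1 = be2) \/ (al1 = 0 /\ al2 = 0 /\ nu1 = nu2)) ->
  rates_design_independent gm a b.
Proof.
  intros hkl hkh ha1 ha2 hb1 hb2 hs hc M1 u1 M2 u2 d1 d2 nu lam al be eps nu' lam' al' be' eps' hf hf' s ip hbs.
  destruct (eps_bnd _ _ _ _ _ _ hf) as [e1 [e2 [he1 he]]].
  destruct (eps_bnd _ _ _ _ _ _ hf') as [e1' [e2' [he1' he']]].
  destruct hc as [[hp e]|[e1a [e2a e3]]].
  - subst be2.
    assert (0 < al1). { destruct ha1 as [h|h]; auto. subst; lra. }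
    assert (0 < al2). { destruct ha2 as [h|h]; auto. subst; lra. }
    destruct (params_B _ _ _ _ _ _ _ _ _ _ _ _ _ _ hf hkl hkh H0 H1 hb1 (hs M1 u1 d1)) as [q1 q2].
    destruct (params_B _ _ _ _ _ _ _ _ _ _ _ _ _ _ hf' hkl hkh H0 H1 hb1 (hs M2 u2 d2)) as [q1' q2'].
    apply (so_of (fun x => Rpower (ln x) (- (2 * sstar s ip) / be1)) _ _ eps eps' e1 e2 e1' e2');
      auto; [apply Pf_ln| |]; intros x; rewrite rate_B; auto; congruence.
  - subst al1 al2 nu2.
    destruct (params_A _ _ _ _ _ _ _ _ _ _ _ _ hf hkl hkh (hs M1 u1 d1)) as [q1 [q2 q3]].
    destruct (params_A _ _ _ _ _ _ _ _ _ _ _ _ hf' hkl hkh (hs M2 u2 d2)) as [q1' [q2' q3']].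
    subst.
    apply (so_of (fun x => rate s ip nu1 0 0 1 x) _ _ eps eps' e1 e2 e1' e2');
      auto; [apply rate_A_Pf| |]; intros x; apply rate_A_beta.
Qed.
Lemma tau_d1 gm v m : tau_d gm 1 (fun _ => v) m = (Cmod (gm m v))^2.
Proof. unfold tau_d. cbn [seq map fold_right]. change (INR 1) with 1. rewrite Rinv_1. ring. Qed.

Lemma form_of (tau tau' : Z -> R) nu al be :
  0 <= al -> 0 < be -> (al = 0 -> 0 < nu) -> (forall m, tau m = tau' m) ->
  asympZ tau' (fun m => Rpower (absZ m) (-2 * nu) * exp (- al * Rpower (absZ m) be)) ->
  tau_form tau nu 0 al be (fun _ => 1).
Proof.
  intros ha hb hn e [C1 [C2 [m0 [h1 [h2 h]]]]].
  split; [intros; lra|]. split; auto. split; auto. split; auto.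
  exists C1, C2, m0. split; auto. split; auto. intros n m hm.
  rewrite e, <- shape0. rewrite !Rmult_1_r. apply h; auto.
Qed.

Lemma rate_pos s ip nu lam al be x : 0 < rate s ip nu lam al be x.
Proof.
  unfold rate. destruct (Req_EM_T al 0); [destruct (Rlt_dec _ _)|];
    try apply Rmult_lt_0_compat; apply Rpower_pos.
Qed.

Lemma sstar1 : sstar 1 (/ 2) = 1.
Proof. unfold sstar. rewrite Rmax_left by lra. field. Qed.

Lemma ln_rate_A nu be x : ln (rate 1 (/ 2) nu 0 0 be x) = - (2 * 1) / (2 * 1 + 2 * nu + 1) * ln x.
Proof.
  unfold rate. destruct (Req_EM_T 0 0) as [_|e]; [|congruence].
  destruct (Rlt_dec (nu * (2 * / 2 - 1)) (sstar 1 (/ 2))) as [_|hn].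
  - replace (2 * 1 * 0 / (2 * 1 + 2 * nu + 1)) with 0 by (unfold Rdiv; ring).
    rewrite Rpower_0, Rmult_1_r, ln_Rpower. reflexivity.
  - exfalso. apply hn. rewrite sstar1. replace (nu * (2 * / 2 - 1)) with 0 by field. lra.
Qed.

Lemma ln_rate_B nu lam al be x : al <> 0 ->
  ln (rate 1 (/ 2) nu lam al be x) = - (2 * 1) / be * ln (ln x).
Proof. intros h. rewrite rate_B, ln_Rpower, sstar1 by auto. reflexivity. Qed.

Lemma so_log (r1 r2 : nat -> R) : same_order r1 r2 -> (forall n, 0 < r1 n) -> (forall n, 0 < r2 n) ->
  exists k1 k2 N0, forall n, (N0 <= n)%nat -> k1 <= ln (r1 n) - ln (r2 n) <= k2.
Proof.
  intros [c1 [c2 [N0 [hc1 [hc2 h]]]]] p1 p2.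
  exists (ln c1), (ln c2), N0. intros n hn. destruct (h n hn) as [h1 h2].
  pose proof (p1 n); pose proof (p2 n).
  apply ln_le in h1; [|apply Rmult_lt_0_compat; auto].
  apply ln_le in h2; auto.
  rewrite ln_mult in h1, h2 by auto. lra.
Qed.

Lemma big_n (N0 : nat) (T : R) : exists n, (N0 <= n)%nat /\ T <= ln (INR n) /\ T <= ln (ln (INR n)).
Proof.
  destruct (INR_archimed 1 (exp (exp (Rabs T))) ltac:(lra)) as [N hN].
  exists (Nat.max N0 N). split; [lia|].
  assert (hx : exp (exp (Rabs T)) <= INR (Nat.max N0 N)).
  { pose proof (le_INR N (Nat.max N0 N) ltac:(lia)). lra. }
  destruct (exp_big (exp (Rabs T)) _ ltac:(rewrite Rabs_pos_eq by (left; apply exp_pos); exact hx)) as [l1 _].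
  pose proof (exp_ineq1_le (Rabs T)). pose proof (Rle_abs T).
  split; [lra|].
  assert (hh : ln (exp (Rabs T)) <= ln (ln (INR (Nat.max N0 N)))) by (apply ln_le; auto; apply exp_pos).
  rewrite ln_exp in hh. lra.
Qed.

Lemma lin_unb d k1 k2 : d <> 0 -> (forall T, exists L, T <= L /\ k1 <= d * L <= k2) -> False.
Proof.
  intros hd h. destruct (h ((Rabs k1 + Rabs k2 + 1) / Rabs d)) as [L [hL [h1 h2]]].
  assert (had : 0 < Rabs d) by (apply Rabs_pos_lt; auto).
  assert (Rabs d * ((Rabs k1 + Rabs k2 + 1) / Rabs d) = Rabs k1 + Rabs k2 + 1) by (field; lra).
  assert (Rabs d * ((Rabs k1 + Rabs k2 + 1) / Rabs d) <= Rabs d * L) by (apply Rmult_le_compat_l; lra).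
  pose proof (Rle_abs k2). pose proof (Rle_abs (- k1)) as hk1. rewrite Rabs_Ropp in hk1.
  pose proof (Rabs_pos k1). pose proof (Rabs_pos k2).
  destruct (Rle_dec 0 d).
  - rewrite Rabs_pos_eq in * by lra. lra.
  - rewrite Rabs_left in * by lra. lra.
Qed.
Lemma inv_eq (x y : R) : 0 < x -> 0 < y -> - (2 * 1) / x = - (2 * 1) / y -> x = y.
Proof.
  intros hx hy e.
  assert (e1 : - (2 * 1) / x * (x * y) = - 2 * y) by (field; lra).
  assert (e2 : - (2 * 1) / y * (x * y) = - 2 * x) by (field; lra).
  rewrite e in e1. lra.
Qed.

Lemma dir_fwd (gm : Z -> R -> C) a b uup ulo nu1 nu2 al1 al2 be1 be2 :
  a <= uup <= b -> a <= ulo <= b ->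
  0 <= al1 -> 0 <= al2 -> 0 < be1 -> 0 < be2 ->
  (al1 = 0 -> 0 < nu1) -> (al2 = 0 -> 0 < nu2) ->
  asympZ (fun m => (Cmod (gm m uup))^2)
         (fun m => Rpower (absZ m) (-2 * nu1) * exp (- al1 * Rpower (absZ m) be1)) ->
  asympZ (fun m => (Cmod (gm m ulo))^2)
         (fun m => Rpower (absZ m) (-2 * nu2) * exp (- al2 * Rpower (absZ m) be2)) ->
  rates_design_independent gm a b ->
  ((0 < al1 * al2 /\ be1 = be2) \/ (al1 = 0 /\ al2 = 0 /\ nu1 = nu2)).
Proof.
  intros hu hl ha1 ha2 hb1 hb2 hn1 hn2 hA1 hA2 hR.
  assert (f1 := form_of (tau_d gm 1 (fun _ => uup)) _ nu1 al1 be1 ha1 hb1 hn1 (fun m => tau_d1 gm uup m) hA1).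
  assert (f2 := form_of (tau_d gm 1 (fun _ => ulo)) _ nu2 al2 be2 ha2 hb2 hn2 (fun m => tau_d1 gm ulo m) hA2).
  assert (hbs : besov_ok 1 (/ 2)) by (unfold besov_ok; rewrite sstar1; lra).
  assert (d1 : design_ok a b 1 (fun _ => uup)) by (split; [lia| intros; auto]).
  assert (d2 : design_ok a b 1 (fun _ => ulo)) by (split; [lia| intros; auto]).
  pose proof (hR 1%nat (fun _ => uup) 1%nat (fun _ => ulo) d1 d2 nu1 0 al1 be1 (fun _ => 1)
                 nu2 0 al2 be2 (fun _ => 1) f1 f2 1 (/ 2) hbs) as hso.
  destruct (so_log _ _ hso (fun n => rate_pos _ _ _ _ _ _ _) (fun n => rate_pos _ _ _ _ _ _ _))
    as [k1 [k2 [N0 hk]]].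
  cbv beta in hk.
  assert (D1 : 0 < 2 * 1 + 2 * nu1 + 1 \/ al1 <> 0).
  { destruct (Req_EM_T al1 0) as [z|z]; [left; specialize (hn1 z); lra|right; auto]. }
  assert (D2 : 0 < 2 * 1 + 2 * nu2 + 1 \/ al2 <> 0).
  { destruct (Req_EM_T al2 0) as [z|z]; [left; specialize (hn2 z); lra|right; auto]. }
  destruct (Req_EM_T al1 0) as [z1|z1]; destruct (Req_EM_T al2 0) as [z2|z2].
  - right. split; auto. split; auto.
    destruct (Req_EM_T nu1 nu2) as [|ne]; auto. exfalso.
    destruct D1 as [D1|D1]; [|congruence]. destruct D2 as [D2|D2]; [|congruence].
    apply (lin_unb (- (2 * 1) / (2 * 1 + 2 * nu1 + 1) - - (2 * 1) / (2 * 1 + 2 * nu2 + 1)) k1 k2).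
    + intros h. apply ne. assert (h' := inv_eq _ _ D1 D2 ltac:(lra)). lra.
    + intros T. destruct (big_n N0 T) as [n [hn [l1 l2]]]. exists (ln (INR n)). split; auto.
      specialize (hk n hn). rewrite Rmult_1_r in hk. subst al1 al2. rewrite !ln_rate_A in hk.
      replace ((- (2 * 1) / (2 * 1 + 2 * nu1 + 1) - - (2 * 1) / (2 * 1 + 2 * nu2 + 1)) * ln (INR n))
        with (- (2 * 1) / (2 * 1 + 2 * nu1 + 1) * ln (INR n) - - (2 * 1) / (2 * 1 + 2 * nu2 + 1) * ln (INR n))
        by ring. auto.
  - exfalso. destruct D1 as [D1|D1]; [|congruence].
    set (q := 2 * 1 / (2 * 1 + 2 * nu1 + 1)). assert (hq : 0 < q) by (apply Rdiv_lt_0_compat; lra).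
    destruct (Gp q (2 * 1 / be2) (- k1) hq) as [Y hY].
    destruct (big_n N0 Y) as [n [hn [l1 l2]]]. specialize (hY _ l1).
    specialize (hk n hn). rewrite Rmult_1_r in hk. subst al1. rewrite ln_rate_A, ln_rate_B in hk by auto.
    assert (e1 : - (2 * 1) / (2 * 1 + 2 * nu1 + 1) * ln (INR n) = - (q * ln (INR n))) by (unfold q, Rdiv; ring).
    assert (e2 : - (2 * 1) / be2 * ln (ln (INR n)) = - (2 * 1 / be2 * ln (ln (INR n)))) by (unfold Rdiv; ring).
    lra.
  - exfalso. destruct D2 as [D2|D2]; [|congruence].
    set (q := 2 * 1 / (2 * 1 + 2 * nu2 + 1)). assert (hq : 0 < q) by (apply Rdiv_lt_0_compat; lra).
    destruct (Gp q (2 * 1 / be1) k2 hq) as [Y hY].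
    destruct (big_n N0 Y) as [n [hn [l1 l2]]]. specialize (hY _ l1).
    specialize (hk n hn). rewrite Rmult_1_r in hk. subst al2. rewrite ln_rate_A, ln_rate_B in hk by auto.
    assert (e1 : - (2 * 1) / (2 * 1 + 2 * nu2 + 1) * ln (INR n) = - (q * ln (INR n))) by (unfold q, Rdiv; ring).
    assert (e2 : - (2 * 1) / be1 * ln (ln (INR n)) = - (2 * 1 / be1 * ln (ln (INR n)))) by (unfold Rdiv; ring).
    lra.
  - left. split.
    + apply Rmult_lt_0_compat; lra.
    + destruct (Req_EM_T be1 be2) as [|ne]; auto. exfalso.
      apply (lin_unb (- (2 * 1) / be1 - - (2 * 1) / be2) k1 k2).
      * intros h. apply ne. apply inv_eq; auto; lra.
      * intros T. destruct (big_n N0 T) as [n [hn [l1 l2]]]. exists (ln (ln (INR n))). split; auto.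
        specialize (hk n hn). rewrite Rmult_1_r in hk. rewrite !ln_rate_B in hk by auto.
        replace ((- (2 * 1) / be1 - - (2 * 1) / be2) * ln (ln (INR n)))
          with (- (2 * 1) / be1 * ln (ln (INR n)) - - (2 * 1) / be2 * ln (ln (INR n))) by ring. auto.
Qed.

Theorem theorem3 (gm : Z -> R -> C) (a b uup ulo nu1 nu2 al1 al2 be1 be2 : R) :
  a <= b ->
  (* g_m is continuous in u on [a,b] *)
  (forall (m : Z) (u : R), a <= u <= b ->
     filterlim (gm m) (within (fun x => a <= x <= b) (locally u)) (locally (gm m u))) ->
  a <= uup <= b -> a <= ulo <= b ->
  (exists K : R, 0 < K /\
     forall (u : R) (m : Z), a <= u <= b -> Cmod (gm m u) <= K * Cmod (gm m uup)) ->
  (exists K : R, 0 < K /\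
     forall (u : R) (m : Z), a <= u <= b -> K * Cmod (gm m ulo) <= Cmod (gm m u)) ->
  0 <= al1 -> 0 <= al2 -> 0 < be1 -> 0 < be2 ->
  (al1 = 0 -> 0 < nu1) -> (al2 = 0 -> 0 < nu2) ->
  asympZ (fun m => (Cmod (gm m uup))^2)
         (fun m => Rpower (absZ m) (-2 * nu1) * exp (- al1 * Rpower (absZ m) be1)) ->
  asympZ (fun m => (Cmod (gm m ulo))^2)
         (fun m => Rpower (absZ m) (-2 * nu2) * exp (- al2 * Rpower (absZ m) be2)) ->
  (rates_design_independent gm a b <->
     ((0 < al1 * al2 /\ be1 = be2) \/ (al1 = 0 /\ al2 = 0 /\ nu1 = nu2))).
Proof.
  intros hab hcont hu hl hK1 hK2 ha1 ha2 hb1 hb2 hn1 hn2 hA1 hA2. split.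
  - apply dir_fwd with uup ulo; auto.
  - intros hc.
    destruct (sandwich gm a b uup ulo nu1 nu2 al1 al2 be1 be2 hK1 hK2 hA1 hA2)
      as [kl [kh [m1 [hkl [hkh hs]]]]].
    apply (dir_back gm a b nu1 nu2 al1 al2 be1 be2 kl kh m1); auto.
Qed.
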